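(* For real $p\neq 0$, the inequality $\frac{2}{3}\left( \frac{\sinh x}{x}\right) ^{p}+\frac{1}{3}\left( \frac{\tanh x}{x}\right) ^{p}>1$ holds for all $x\in(0,\infty)$ if and only if $p>0$ or $p\leq -\frac{4}{5}$. *)

(* Defs.v *)
From Stdlib Require Export Reals.

(* Main.v *)
Require Import Defs.
From Stdlib Require Import Reals Lra Psatz.
From Coquelicot Require Import Coquelicot.
Open Scope R_scope.

Definition E (q c : R) := exp (q * ln c).
Definition Phi q c := ln (2*c^2 + E q c) - ln c - ln (2 + E q c) - / q * ln ((2 + E q c)/3).
Definition Mf q c := 2*c^2 + (q-1)*E q c - q*c^2*E q c - (E q c)^2.
Definition W q c := exp (- / q * ln ((2 + E q c)/3)).
Definition G q x := x - sinh x * W q (cosh x).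

Lemma E_pos q c : 0 < E q c. Proof. unfold E; apply exp_pos. Qed.

Lemma Phi_der q c : 0 < c -> q <> 0 ->
  is_derive (Phi q) c (2 * Mf q c / (c * (2*c^2 + E q c) * (2 + E q c))).
Proof.
  intros Hc Hq. unfold Phi, Mf.
  assert (HE := E_pos q c). unfold E in *.
  auto_derive.
  - repeat split; try lra; nra.
  - set (e := exp (q * ln c)) in *. field. repeat split; try lra; nra.
Qed.

Lemma cosh_pos x : 0 < cosh x.
Proof. unfold cosh. assert (H1 := exp_pos x). assert (H2 := exp_pos (-x)). lra. Qed.

Lemma G_der q x : q <> 0 ->
  is_derive (G q) x (1 - W q (cosh x) * (2 * (cosh x)^2 + E q (cosh x)) / (cosh x * (2 + E q (cosh x)))).
Proof.
  intros Hq. unfold G, W, E, sinh, cosh.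
  assert (H1 := exp_pos x). assert (H2 := exp_pos (-x)).
  assert (HE := E_pos q ((exp x + exp (- x)) / 2)). unfold E in HE.
  auto_derive.
  - repeat split; try lra; nra.
  - unfold Rdiv. rewrite !exp_Ropp in *.
    set (a := exp (q * ln ((exp x + / exp x) * / 2))) in *.
    set (w := exp (- / q * ln ((2 + a) * / 3))).
    assert (0 < a) by apply exp_pos.
    field. repeat split; try lra; nra.
Qed.

Lemma mono (f f' : R -> R) a b : a < b ->
  (forall c, a <= c <= b -> is_derive f c (f' c)) ->
  (forall c, a < c < b -> 0 < f' c) -> f a < f b.
Proof.
  intros Hab Hd Hp.
  destruct (MVT_cor2 f f' a b Hab) as [c [Hc1 Hc2]].
  - intros c Hc. apply is_derive_Reals. now apply Hd.
  - specialize (Hp c Hc2). nra.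
Qed.

Lemma E1 q : E q 1 = 1.
Proof. unfold E. rewrite ln_1, Rmult_0_r. apply exp_0. Qed.

Lemma Phi1 q : Phi q 1 = 0.
Proof.
  unfold Phi. rewrite E1, ln_1.
  replace (2 * 1 ^ 2 + 1) with 3 by ring. replace ((2+1)/3) with 1 by field.
  rewrite ln_1. replace (2+1) with 3 by ring. ring.
Qed.

Lemma Mf1 q : Mf q 1 = 0.
Proof. unfold Mf. rewrite E1. ring. Qed.

Lemma expPhi q c : 0 < c ->
  exp (Phi q c) = W q c * (2 * c^2 + E q c) / (c * (2 + E q c)).
Proof.
  intros Hc. assert (HE := E_pos q c).
  replace (Phi q c) with (ln (2*c^2+E q c) + - ln c + - ln(2+E q c) + (- / q * ln ((2 + E q c) / 3))) by (unfold Phi; ring).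
  unfold W. rewrite !exp_plus, !exp_Ropp, !exp_ln; try lra; try nra.
  field. lra.
Qed.

Lemma cosh_gt1 x : x <> 0 -> 1 < cosh x.
Proof.
  intros Hx. unfold cosh. rewrite exp_Ropp.
  assert (H := exp_pos x). assert (Hn : exp x <> 1).
  { intro H1. apply Hx. rewrite <- (ln_exp x), H1. apply ln_1. }
  assert (0 < (exp x - 1)^2).
  { assert (exp x - 1 <> 0) by lra. nra. }
  apply (Rmult_lt_reg_r (2 * exp x)); [lra|]. field_simplify; try lra.
Qed.

Lemma exp_le x y : x <= y -> exp x <= exp y.
Proof. intros [H|H]. left; now apply exp_increasing. subst; lra. Qed.

Lemma ln_nonneg c : 1 <= c -> 0 <= ln c.
Proof. intros [H|H]. left. rewrite <- ln_1. apply ln_increasing; lra. subst; rewrite ln_1; lra. Qed.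

Lemma ln_pos c : 1 < c -> 0 < ln c.
Proof. intros H. rewrite <- ln_1. apply ln_increasing; lra. Qed.

Lemma E_le q c : 0 < q < 1 -> 1 <= c -> 1 <= E q c <= c.
Proof.
  intros Hq Hc. pose proof (ln_nonneg c Hc). unfold E. split.
  - rewrite <- exp_0. apply exp_le. nra.
  - rewrite <- (exp_ln c) at 2 by lra. apply exp_le. nra.
Qed.

Lemma Mf_der q c : 0 < c ->
  is_derive (Mf q) c ((4*c^2 + q*(q-1)*E q c - (2*q+q^2)*c^2*E q c - 2*q*(E q c)^2)/c).
Proof.
  intros Hc. unfold Mf. assert (HE := E_pos q c). unfold E in *.
  auto_derive.
  - lra.
  - set (e := exp (q * ln c)) in *. field. lra.
Qed.

Definition K q := (4 - 3*q + q^2)/(q*(2+q)).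

Lemma K_gt1 q : 0 < q < 4/5 -> 1 < K q.
Proof.
  intros Hq. unfold K. apply (Rmult_lt_reg_r (q*(2+q))). nra.
  field_simplify; nra.
Qed.

Lemma Mf_pos q c : 0 < q < 4/5 -> 1 < c -> c < K q -> 0 < Mf q c.
Proof.
  intros Hq Hc HK. rewrite <- (Mf1 q).
  apply (mono (Mf q) (fun c => (4*c^2 + q*(q-1)*E q c - (2*q+q^2)*c^2*E q c - 2*q*(E q c)^2)/c) 1 c Hc).
  - intros d Hd. apply Mf_der. lra.
  - intros d Hd. apply Rdiv_lt_0_compat; [|lra].
    destruct (E_le q d) as [HE1 HE2]; try lra.
    assert (Hdk : q*(2+q)*d < 4 - 3*q + q^2).
    { unfold K in HK. apply (Rmult_lt_compat_l (q*(2+q))) in HK; [|nra].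
      replace (q * (2 + q) * ((4 - 3 * q + q ^ 2) / (q * (2 + q)))) with (4 - 3*q + q^2) in HK by (field; lra).
      assert (0 < q*(2+q)) by nra.
      assert (q*(2+q)*d < q*(2+q)*c) by (apply Rmult_lt_compat_l; lra). lra. }
    assert (Hb : 0 < (4-2*q) - q*(1-q) - q*(2+q)*d) by nra.
    assert (H1 : 0 < d^2 * ((4-2*q) - q*(1-q) - q*(2+q)*d)) by (apply Rmult_lt_0_compat; nra).
    set (e := E q d) in *.
    assert (q*(1-q)*e <= q*(1-q)*d) by (apply Rmult_le_compat_l; nra).
    assert (q*(2+q)*d^2*e <= q*(2+q)*d^2*d) by (apply Rmult_le_compat_l; nra).
    assert (e^2 <= d^2) by nra.
    assert (2*q*e^2 <= 2*q*d^2) by (apply Rmult_le_compat_l; nra).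
    assert (q*(1-q)*d <= q*(1-q)*d^2) by (apply Rmult_le_compat_l; nra).
    nra.
Qed.

Lemma Phi_pos q c : 0 < q < 4/5 -> 1 < c -> c < K q -> 0 < Phi q c.
Proof.
  intros Hq Hc HK. rewrite <- (Phi1 q).
  apply (mono (Phi q) (fun c => 2 * Mf q c / (c * (2*c^2 + E q c) * (2 + E q c))) 1 c Hc).
  - intros d Hd. apply Phi_der; lra.
  - intros d Hd. assert (HE := E_pos q d). apply Rdiv_lt_0_compat.
    + assert (0 < Mf q d) by (apply Mf_pos; lra). lra.
    + apply Rmult_lt_0_compat; [|lra]. apply Rmult_lt_0_compat; nra.
Qed.

Lemma cosh_le a b : 0 <= a <= b -> cosh a <= cosh b.
Proof.
  intros H. unfold cosh. rewrite !exp_Ropp.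
  assert (Ha : 1 <= exp a) by (rewrite <- exp_0; apply exp_le; lra).
  assert (Hab : exp a <= exp b) by (apply exp_le; lra).
  set (x := exp a) in *. set (y := exp b) in *.
  assert (1 <= x*y) by nra.
  assert (0 <= (y - x) * (x*y - 1)) by (apply Rmult_le_pos; lra).
  apply Rmult_le_reg_r with (2*x*y); [nra|].
  replace ((x + / x) / 2 * (2 * x * y)) with (x*x*y + y) by (field; lra).
  replace ((y + / y) / 2 * (2 * x * y)) with (y*y*x + x) by (field; lra).
  nra.
Qed.

Lemma G0 q : G q 0 = 0.
Proof. unfold G, sinh. rewrite Ropp_0. lra. Qed.

Lemma G_neg q x0 : 0 < q < 4/5 -> 0 < x0 -> cosh x0 < K q -> G q x0 < 0.
Proof.
  intros Hq Hx HK. rewrite <- (G0 q).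
  apply Ropp_lt_cancel.
  apply (mono (fun x => - G q x) (fun x => - (1 - W q (cosh x) * (2 * (cosh x)^2 + E q (cosh x)) / (cosh x * (2 + E q (cosh x))))) 0 x0 Hx).
  - intros d Hd. apply (is_derive_opp (G q)). apply G_der; lra.
  - intros d Hd. rewrite <- expPhi by apply cosh_pos.
    assert (1 < cosh d) by (apply cosh_gt1; lra).
    assert (cosh d <= cosh x0) by (apply cosh_le; lra).
    assert (0 < Phi q (cosh d)) by (apply Phi_pos; lra).
    assert (1 < exp (Phi q (cosh d))) by (rewrite <- exp_0; apply exp_increasing; lra).
    lra.
Qed.

Lemma Mf_neg c : 1 < c -> Mf (4/5) c < 0.
Proof.
  intros Hc. pose proof (ln_pos c Hc) as Hl.
  set (t := exp (ln c / 5)).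
  assert (Ht : 1 < t) by (unfold t; rewrite <- exp_0; apply exp_increasing; lra).
  assert (Hct : c = t^5).
  { unfold t. rewrite <- (exp_ln c) at 1 by lra. simpl. rewrite Rmult_1_r.
    rewrite <- !exp_plus. f_equal. field. }
  assert (HEt : E (4/5) c = t^4).
  { unfold E, t. simpl. rewrite Rmult_1_r. rewrite <- !exp_plus. f_equal. field. }
  unfold Mf. rewrite HEt, Hct.
  set (z := t^2).
  assert (Hz : 1 < z) by (unfold z; nra).
  replace (2 * (t ^ 5) ^ 2 + (4 / 5 - 1) * t ^ 4 - 4 / 5 * (t ^ 5) ^ 2 * t ^ 4 - (t ^ 4) ^ 2)
    with (- (z^2/5) * ((z-1)^2 * (4*z^3 + 8*z^2 + 2*z + 1))) by (unfold z; field).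
  assert (0 < z^2/5) by nra.
  assert (0 < (z-1)^2 * (4*z^3 + 8*z^2 + 2*z + 1)).
  { apply Rmult_lt_0_compat; nra. }
  nra.
Qed.

Lemma Phi_neg c : 1 < c -> Phi (4/5) c < 0.
Proof.
  intros Hc. rewrite <- (Phi1 (4/5)). apply Ropp_lt_cancel.
  apply (mono (fun c => - Phi (4/5) c) (fun c => - (2 * Mf (4/5) c / (c * (2*c^2 + E (4/5) c) * (2 + E (4/5) c)))) 1 c Hc).
  - intros d Hd. apply (is_derive_opp (Phi (4/5))). apply Phi_der; lra.
  - intros d Hd. assert (HE := E_pos (4/5) d).
    assert (Mf (4/5) d < 0) by (apply Mf_neg; lra).
    assert (0 < d * (2*d^2 + E (4/5) d) * (2 + E (4/5) d)).
    { apply Rmult_lt_0_compat; [|lra]. apply Rmult_lt_0_compat; nra. }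
    assert (0 < (- (2 * Mf (4/5) d)) / (d * (2*d^2 + E (4/5) d) * (2 + E (4/5) d))) by (apply Rdiv_lt_0_compat; lra).
    unfold Rdiv in *. lra.
Qed.

Lemma G_pos x : 0 < x -> 0 < G (4/5) x.
Proof.
  intros Hx. rewrite <- (G0 (4/5)).
  apply (mono (G (4/5)) (fun x => 1 - W (4/5) (cosh x) * (2 * (cosh x)^2 + E (4/5) (cosh x)) / (cosh x * (2 + E (4/5) (cosh x)))) 0 x Hx).
  - intros d Hd. apply G_der; lra.
  - intros d Hd. rewrite <- expPhi by apply cosh_pos.
    assert (1 < cosh d) by (apply cosh_gt1; lra).
    assert (Phi (4/5) (cosh d) < 0) by (apply Phi_neg; lra).
    assert (exp (Phi (4/5) (cosh d)) < 1) by (rewrite <- exp_0; apply exp_increasing; lra).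
    lra.
Qed.

Definition Z x := x - sinh x * exp (- / 3 * ln (cosh x)).

Lemma Z_der x : is_derive Z x (1 - exp (- / 3 * ln (cosh x)) * (2 * (cosh x)^2 + 1) / (3 * cosh x)).
Proof.
  unfold Z, sinh, cosh.
  assert (H1 := exp_pos x). assert (H2 := exp_pos (-x)).
  auto_derive.
  - lra.
  - unfold Rdiv. rewrite !exp_Ropp in *.
    set (w := exp (- / 3 * ln ((exp x + / exp x) * / 2))).
    field. split; try lra. nra.
Qed.

Lemma Z0 : Z 0 = 0.
Proof. unfold Z, sinh. rewrite Ropp_0. lra. Qed.

Lemma Z_neg x : 0 < x -> Z x < 0.
Proof.
  intros Hx. rewrite <- Z0. apply Ropp_lt_cancel.
  apply (mono (fun x => - Z x) (fun x => - (1 - exp (- / 3 * ln (cosh x)) * (2 * (cosh x)^2 + 1) / (3 * cosh x))) 0 x Hx).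
  - intros d Hd. apply (is_derive_opp Z). apply Z_der.
  - intros d Hd.
    assert (Hc : 1 < cosh d) by (apply cosh_gt1; lra).
    set (c := cosh d) in *.
    pose proof (ln_pos c Hc) as Hl.
    set (t := exp (ln c / 3)).
    assert (Ht : 1 < t) by (unfold t; rewrite <- exp_0; apply exp_increasing; lra).
    assert (Hct : c = t^3).
    { unfold t. rewrite <- (exp_ln c) at 1 by lra. simpl. rewrite Rmult_1_r.
      rewrite <- !exp_plus. f_equal. field. }
    assert (Hw : exp (- / 3 * ln c) = / t).
    { unfold t. rewrite <- exp_Ropp. f_equal. field. }
    rewrite Hw, Hct.
    replace (- (1 - / t * (2 * (t ^ 3) ^ 2 + 1) / (3 * t ^ 3))) with ((t^2-1)^2*(2*t^2+1) / (3*t^4)) by (field; lra).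
    assert (0 < t^2 - 1) by nra.
    apply Rdiv_lt_0_compat; [|apply Rmult_lt_0_compat; [lra|apply pow_lt; lra]].
    apply Rmult_lt_0_compat; [apply pow_lt; lra|nra].
Qed.

Lemma mono_le (f f' : R -> R) a b : a <= b ->
  (forall c, a <= c <= b -> is_derive f c (f' c)) ->
  (forall c, a < c < b -> 0 <= f' c) -> f a <= f b.
Proof.
  intros [Hab|Hab] Hd Hp; [|subst; lra].
  destruct (MVT_cor2 f f' a b Hab) as [c [Hc1 Hc2]].
  - intros c Hc. apply is_derive_Reals. now apply Hd.
  - specialize (Hp c Hc2). nra.
Qed.

Lemma bernoulli r X : 1 <= r -> 0 < X -> 1 + r * (X - 1) <= exp (r * ln X).
Proof.
  intros Hr HX.
  set (f := fun y => exp (r * ln y) - r * y).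
  set (f' := fun y => r * exp (r * ln y) / y - r).
  assert (Hd : forall y, 0 < y -> is_derive f y (f' y)).
  { intros y Hy. unfold f, f'. auto_derive. lra. field. lra. }
  assert (Hf1 : f 1 = 1 - r) by (unfold f; rewrite ln_1, Rmult_0_r, exp_0; ring).
  assert (Hf'e : forall y, 0 < y -> f' y = r * (exp ((r-1) * ln y) - 1)).
  { intros y Hy. unfold f'. replace ((r-1) * ln y) with (r * ln y + - ln y) by ring.
    rewrite exp_plus, exp_Ropp, exp_ln by lra. field. lra. }
  destruct (Rle_or_lt 1 X) as [H1|H1].
  - assert (f 1 <= f X).
    { apply (mono_le f f' 1 X H1). intros; apply Hd; lra.
      intros c Hc. rewrite Hf'e by lra.
      assert (0 <= ln c) by (apply ln_nonneg; lra).
      assert (Hm : 0 <= (r-1) * ln c) by (apply Rmult_le_pos; lra).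
      pose proof (exp_le 0 _ Hm) as He. rewrite exp_0 in He.
      apply Rmult_le_pos; lra. }
    unfold f in *. lra.
  - assert (- f X <= - f 1).
    { apply (mono_le (fun y => - f y) (fun y => - f' y) X 1); [lra| |].
      intros c Hc. apply (is_derive_opp f). apply Hd; lra.
      intros c Hc. rewrite Hf'e by lra.
      assert (ln c < 0) by (rewrite <- ln_1; apply ln_increasing; lra).
      assert (Hm : (r-1) * ln c <= 0) by nra.
      pose proof (exp_le _ 0 Hm) as He. rewrite exp_0 in He.
      assert (0 <= r * (1 - exp ((r-1) * ln c))) by (apply Rmult_le_pos; lra). lra. }
    unfold f in *. lra.
Qed.

Lemma sinh_pos x : 0 < x -> 0 < sinh x.
Proof.
  intros Hx. unfold sinh. assert (exp (-x) < exp x) by (apply exp_increasing; lra). lra.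
Qed.

Lemma LHS_eq p x : 0 < x ->
  2 / 3 * Rpower (sinh x / x) p + 1 / 3 * Rpower (tanh x / x) p =
  2/3 * exp (p * ln (sinh x / x)) + 1/3 * (exp (p * ln (sinh x / x)) * exp (- p * ln (cosh x))).
Proof.
  intros Hx. pose proof (sinh_pos x Hx). pose proof (cosh_pos x).
  unfold Rpower, tanh.
  replace (sinh x / cosh x / x) with (sinh x / x * / cosh x) by (field; lra).
  rewrite ln_mult, ln_Rinv; try lra.
  2: apply Rdiv_lt_0_compat; lra. 2: apply Rinv_0_lt_compat; lra.
  rewrite <- exp_plus. f_equal. f_equal. f_equal. ring.
Qed.

Lemma tr1 x a : 0 < x -> sinh x * exp a < x -> ln (sinh x / x) < -a.
Proof.
  intros Hx H. pose proof (sinh_pos x Hx).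
  rewrite <- (ln_exp (-a)). apply ln_increasing. apply Rdiv_lt_0_compat; lra.
  rewrite exp_Ropp. pose proof (exp_pos a).
  apply (Rmult_lt_reg_r (x * exp a)). nra.
  replace (sinh x / x * (x * exp a)) with (sinh x * exp a) by (field; lra).
  replace (/ exp a * (x * exp a)) with x by (field; lra). lra.
Qed.

Lemma tr2 x a : 0 < x -> x < sinh x * exp a -> -a < ln (sinh x / x).
Proof.
  intros Hx H. pose proof (sinh_pos x Hx).
  rewrite <- (ln_exp (-a)). apply ln_increasing. apply exp_pos.
  rewrite exp_Ropp. pose proof (exp_pos a).
  apply (Rmult_lt_reg_r (x * exp a)). nra.
  replace (sinh x / x * (x * exp a)) with (sinh x * exp a) by (field; lra).
  replace (/ exp a * (x * exp a)) with x by (field; lra). lra.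
Qed.

Theorem proposition4p3 (p : R) (hp : p <> 0) :
  (forall x : R, 0 < x ->
     2 / 3 * Rpower (sinh x / x) p + 1 / 3 * Rpower (tanh x / x) p > 1)
  <-> (p > 0 \/ p <= - (4 / 5)).
Proof.
  split.
  - intros H. destruct (Rlt_or_le 0 p) as [Hp|Hp]; [left; lra|].
    destruct (Rle_or_lt p (-(4/5))) as [Hp2|Hp2]; [right; lra|].
    exfalso. set (q := -p).
    assert (Hq : 0 < q < 4/5) by (unfold q; lra).
    pose proof (K_gt1 q Hq) as HK.
    set (eps := Rmin 1 (K q - 1)).
    assert (He1 : 0 < eps) by (unfold eps; apply Rmin_glb_lt; lra).
    assert (He2 : eps <= 1) by apply Rmin_l.
    assert (He3 : eps <= K q - 1) by apply Rmin_r.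
    set (x0 := ln (1 + eps)).
    assert (Hx0 : 0 < x0) by (apply ln_pos; lra).
    assert (Hc0 : cosh x0 < K q).
    { unfold cosh, x0. rewrite exp_Ropp, exp_ln by lra.
      replace ((1 + eps + / (1 + eps)) / 2) with (1 + eps^2 / (2 * (1 + eps))) by (field; lra).
      assert (eps^2 / (2*(1+eps)) < eps) .
      { apply (Rmult_lt_reg_r (2*(1+eps))). lra.
        replace (eps ^ 2 / (2 * (1 + eps)) * (2 * (1 + eps))) with (eps^2) by (field; lra). nra. }
      lra. }
    pose proof (G_neg q x0 Hq Hx0 Hc0) as HG.
    unfold G, W in HG.
    assert (HA := tr2 x0 (- / q * ln ((2 + E q (cosh x0)) / 3)) Hx0 ltac:(lra)).
    set (A := ln (sinh x0 / x0)) in *.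
    set (L := ln (cosh x0)).
    set (w := (2 + E q (cosh x0)) / 3) in *.
    assert (Hw : 0 < w) by (unfold w; pose proof (E_pos q (cosh x0)); lra).
    assert (HqA : ln w < q * A).
    { replace (- (- / q * ln w)) with (ln w / q) in HA by (field; lra).
      apply (Rmult_lt_compat_l q) in HA; [|lra].
      replace (q * (ln w / q)) with (ln w) in HA by (field; lra). lra. }
    assert (Hexp : w < exp (q * A)).
    { rewrite <- (exp_ln w) by lra. apply exp_increasing. lra. }
    specialize (H x0 Hx0). rewrite LHS_eq in H by lra. fold A in H. fold L in H.
    replace p with (-q) in H by (unfold q; ring).
    assert (HE : E q (cosh x0) = exp (- - q * L)) by (unfold E, L; f_equal; ring).
    replace (- q * A) with (- (q * A)) in H by ring. rewrite exp_Ropp in H.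
    assert (H3 : 2 / 3 * / exp (q * A) + 1 / 3 * (/ exp (q * A) * E q (cosh x0)) = w / exp (q*A)).
    { unfold w. field. apply Rgt_not_eq, exp_pos. }
    rewrite <- HE in H. rewrite H3 in H.
    pose proof (exp_pos (q * A)).
    apply (Rmult_lt_compat_r (exp (q*A))) in H; [|lra].
    replace (w / exp (q * A) * exp (q * A)) with w in H by (field; lra). lra.
  - intros Hp x Hx.
    rewrite LHS_eq by lra.
    set (A := ln (sinh x / x)). set (L := ln (cosh x)).
    destruct Hp as [Hp|Hp].
    +
      pose proof (Z_neg x Hx) as HZ. unfold Z in HZ.
      assert (HA := tr2 x (- / 3 * ln (cosh x)) Hx ltac:(lra)). fold A L in HA.
      set (m := p * (3*A - L) / 3).
      assert (Hm : 0 < m) by (unfold m; apply Rdiv_lt_0_compat; [apply Rmult_lt_0_compat|]; lra).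
      assert (H1 : exp m * (1 + (p*A - m)) <= exp (p*A)).
      { replace (p*A) with (m + (p*A - m)) at 2 by ring. rewrite exp_plus.
        apply Rmult_le_compat_l. left; apply exp_pos. apply exp_ineq1_le. }
      assert (H2 : exp m * (1 + (p*A - p*L - m)) <= exp (p*A) * exp (-p*L)).
      { rewrite <- exp_plus. replace (p*A + -p*L) with (m + (p*A - p*L - m)) by ring. rewrite exp_plus.
        apply Rmult_le_compat_l. left; apply exp_pos. apply exp_ineq1_le. }
      assert (H3 : 1 < exp m) by (rewrite <- exp_0; apply exp_increasing; lra).
      assert (H4 : 2/3 * (exp m * (1 + (p*A - m))) + 1/3 * (exp m * (1 + (p*A - p*L - m))) = exp m)
        by (unfold m; field).
      lra.
    +
      pose proof (G_pos x Hx) as HG. unfold G, W in HG.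
      assert (HA := tr1 x (- / (4/5) * ln ((2 + E (4/5) (cosh x)) / 3)) Hx ltac:(lra)). fold A in HA.
      set (q := 4/5) in *.
      set (w := (2 + E q (cosh x)) / 3) in *.
      assert (Hw : 0 < w) by (unfold w; pose proof (E_pos q (cosh x)); lra).
      assert (HqA : q * A < ln w).
      { replace (- (- / q * ln w)) with (ln w / q) in HA by (unfold q; field).
        apply (Rmult_lt_compat_l q) in HA; [|unfold q; lra].
        replace (q * (ln w / q)) with (ln w) in HA by (unfold q; field). lra. }
      assert (Hexp : exp (q * A) < w).
      { rewrite <- (exp_ln w) by lra. apply exp_increasing. lra. }
      set (X := exp (- q * A)). set (Y := exp (- q * A) * exp (q * L)).
      assert (HXY : 1 < 2/3 * X + 1/3 * Y).
      { unfold X, Y.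
        replace (exp (- q * A)) with (/ exp (q * A)) by (rewrite <- exp_Ropp; f_equal; ring).
        assert (HE : E q (cosh x) = exp (q * L)) by reflexivity.
        pose proof (exp_pos (q*A)).
        apply (Rmult_lt_reg_r (exp (q*A))); [lra|].
        replace ((2 / 3 * / exp (q * A) + 1 / 3 * (/ exp (q * A) * exp (q * L))) * exp (q * A))
          with ((2 + exp (q*L))/3) by (field; lra).
        rewrite <- HE. fold w. lra. }
      set (r := p / (-q)).
      assert (Hr : 1 <= r).
      { unfold r, q. apply (Rmult_le_reg_r (4/5)); [lra|].
        replace (p / - (4 / 5) * (4 / 5)) with (-p) by field. unfold q in Hp. lra. }
      assert (HX : exp (p * A) = exp (r * ln X)).
      { unfold X. rewrite ln_exp. f_equal. unfold r, q. field. }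
      assert (HY : exp (p * A) * exp (- p * L) = exp (r * ln Y)).
      { unfold Y. rewrite <- !exp_plus, ln_exp. f_equal. unfold r, q. field. }
      rewrite HY, HX.
      assert (B1 := bernoulli r X Hr ltac:(apply exp_pos)).
      assert (B2 := bernoulli r Y Hr ltac:(unfold Y; rewrite <- exp_plus; apply exp_pos)).
      assert (0 < r * (2/3 * X + 1/3 * Y - 1)) by (apply Rmult_lt_0_compat; lra).
      lra.
Qed.
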